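(* Let $K$ be a totally real number field of degree $n$ and let $F$ be a face of the sail $\mathcal{S}_K$. Then $F$ is contained in the hyperplane $\{x\in\mathbb{R}^n:\sum_{i=1}^n\tau_i(\delta)x_i=k\}$ for some $\delta\in\mathcal{O}_K^{\vee,+}$ and some $k\in\mathbb{N}$.
   Context: $\tau_1,\dots,\tau_n$ are the real embeddings of $K$, $\iota_M:K\to\mathbb{R}^n$, $\alpha\mapsto(\tau_1(\alpha),\dots,\tau_n(\alpha))$ the Minkowski embedding and $\Lambda=\iota_M(\mathcal{O}_K)$. The Klein polyhedron is $\mathcal{K}_K=\operatorname{Conv}(\Lambda\cap\mathbb{R}_{>0}^n)$ and the sail $\mathcal{S}_K$ is its boundary; faces of the sail are the faces of this polyhedron (they are integer polytopes, i.e. with vertices in $\Lambda$). The codifferent is $\mathcal{O}_K^\vee=\{\delta\in K:\operatorname{Tr}_{K/\mathbb{Q}}(\delta\alpha)\in\mathbb{Z}\ \forall\alpha\in\mathcal{O}_K\}$ and $\mathcal{O}_K^{\vee,+}$ is the set of its totally positive elements. *)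

(* Defs.v *)
From HB Require Import structures.
From mathcomp Require Import all_boot all_order all_algebra all_field.
From mathcomp Require Import boolp classical_sets reals.
Set Implicit Arguments. Unset Strict Implicit. Unset Printing Implicit Defensive.
Import Order.TTheory GRing.Theory Num.Theory.
Local Open Scope ring_scope.
Local Open Scope classical_set_scope.

Section KleinDefs.
Variables (R : realType) (K : fieldExtType rat) (n : nat).
Variable tau : 'I_n -> {rmorphism K -> R}.

(* K is totally real of degree n and tau_1..tau_n are its (real) embeddings:
   n = [K:Q] and the tau_i are n pairwise distinct ring morphisms K -> R
   (there are at most [K:Q] embeddings of K into C, so these are all of them
   and all are real). *)
Definition totally_real_embeddings : Prop :=
  n = \dim {:K} /\
  forall i j : 'I_n, (forall x : K, tau i x = tau j x) -> i = j.

Definition in_OK (x : K) : Prop :=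
  exists p : {poly int}, p \is monic /\ root (map_poly (fun z : int => z%:~R) p) x.

Definition minkowski (a : K) : 'rV[R]_n := \row_i tau i a.

(* Trace K/Q, written as the sum of the (all real) embeddings, viewed in R. *)
Definition traceKR (x : K) : R := \sum_i tau i x.

Definition in_codifferent (d : K) : Prop :=
  forall a : K, in_OK a -> exists z : int, traceKR (d * a) = z%:~R.

Definition totally_positive (d : K) : Prop := forall i, 0 < tau i d.

Definition pos_lattice_points : set 'rV[R]_n :=
  [set v | exists a : K, in_OK a /\ v = minkowski a /\ forall i, 0 < v ord0 i].

End KleinDefs.

Definition conv (R : realType) (n : nat) (S : set 'rV[R]_n) : set 'rV[R]_n :=
  [set x | exists (m : nat) (p : 'I_m -> 'rV[R]_n) (w : 'I_m -> R),
     (forall j, S (p j)) /\ (forall j, 0 <= w j) /\ \sum_j w j = 1 /\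
     x = \sum_j w j *: p j].

Definition dotr (R : realType) (n : nat) (l x : 'rV[R]_n) : R :=
  \sum_i l ord0 i * x ord0 i.

Definition klein_polyhedron (R : realType) (K : fieldExtType rat) (n : nat)
  (tau : 'I_n -> {rmorphism K -> R}) : set 'rV[R]_n :=
  conv (pos_lattice_points tau).

Definition is_face (R : realType) (n : nat) (C F : set 'rV[R]_n) : Prop :=
  exists (l : 'rV[R]_n) (c : R),
    l != 0 /\ (forall x, C x -> c <= dotr l x) /\
    F = [set x | C x /\ dotr l x = c] /\ F !=set0.

(* Faces of the sail = faces of the Klein polyhedron. *)
Definition is_sail_face (R : realType) (K : fieldExtType rat) (n : nat)
  (tau : 'I_n -> {rmorphism K -> R}) (F : set 'rV[R]_n) : Prop :=
  is_face (klein_polyhedron tau) F.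

(* Main.v *)
Require Import Defs.
From HB Require Import structures.
From mathcomp Require Import all_boot all_order all_algebra all_field.
From mathcomp Require Import boolp classical_sets reals.
From mathcomp Require Import algC algnum.
From mathcomp Require Import ring lra.
Set Implicit Arguments. Unset Strict Implicit. Unset Printing Implicit Defensive.
Import Order.TTheory GRing.Theory Num.Theory.
Local Open Scope ring_scope.

Lemma rat_int_of_integral (R : realType) (t : rat) :
  integralOver (intr : int -> R) (ratr t) -> t \is a Num.int.
Proof.
case=> p pm hr.
have h1 : root (map_poly (intr : int -> rat) p) t.
  rewrite -(fmorph_root (ratr : {rmorphism rat -> R})) -map_poly_comp.
  have -> : map_poly (ratr \o intr) p = map_poly (intr : int -> R) p.
    by apply: eq_map_poly => z /=; rewrite rmorph_int.
  exact: hr.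
have h2 : root (map_poly (intr : int -> algC) p) (ratr t).
  have -> : map_poly (intr : int -> algC) p = map_poly ratr (map_poly (intr : int -> rat) p).
    by rewrite -map_poly_comp; apply: eq_map_poly => z /=; rewrite rmorph_int.
  by rewrite fmorph_root.
have hA : ratr t \in Aint.
  apply: root_monic_Aint h2 _ _; first exact: monic_map.
  by apply/polyOverP => i; rewrite coef_map /= intr_int.
have /intrP [m hm] := Cint_rat_Aint (Crat_rat t) hA.
apply/intrP; exists m; apply: (fmorph_inj (ratr : {rmorphism rat -> algC})).
by rewrite rmorph_int; exact: hm.
Qed.

Lemma in_OK_integral (K : fieldExtType rat) (x : K) :
  in_OK x <-> integralOver (intr : int -> K) x.
Proof. by split; [case=> p [h1 h2]; exists p | case=> p h1 h2; exists p]. Qed.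

Lemma integral_morph (K : fieldExtType rat) (R : realType) (f : {rmorphism K -> R}) (x : K) :
  integralOver (intr : int -> K) x -> integralOver (intr : int -> R) (f x).
Proof.
case=> p pm hr; exists p => //.
have -> : map_poly (intr : int -> R) p = map_poly f (map_poly (intr : int -> K) p).
  by rewrite -map_poly_comp; apply: eq_map_poly => z /=; rewrite rmorph_int.
by rewrite rmorph_root.
Qed.

Lemma integral_sum (K : fieldType) (I : finType) (f : I -> K) :
  (forall i, integralOver (intr : int -> K) (f i)) ->
  integralOver (intr : int -> K) (\sum_i f i).
Proof.
move=> h; elim/big_rec: _ => [|i x _ hx]; first exact: integral0.
exact: integral_add.
Qed.

Lemma integral_intr (K : fieldType) (z : int) : integralOver (intr : int -> K) z%:~R.
Proof. exact: integral_id. Qed.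

Lemma trunc_close (R : realType) (u v : R) : 0 <= u -> 0 <= v ->
  Num.truncn u = Num.truncn v -> `|u - v| < 1.
Proof.
move=> hu hv he.
have /andP[u1 u2] := truncn_itv hu; have /andP[v1 v2] := truncn_itv hv.
rewrite he in u1 u2; rewrite ltr_norml; apply/andP; split.
  by rewrite -subr_gt0; move: u1 v2; rewrite -natr1; lra.
by move: u2 v1; rewrite -natr1; lra.
Qed.

Lemma le_sum_one (R : realType) (I : finType) (F : I -> R) j :
  (forall i, 0 <= F i) -> F j <= \sum_i F i.
Proof.
move=> h; rewrite (bigD1 j) //= lerDl; apply: sumr_ge0 => i _; exact: h.
Qed.

Lemma pigeon (R : realType) (n : nat) (a : 'I_n -> 'I_n -> R) (i : 'I_n) (eps : R) :
  0 < eps -> exists m : 'I_n -> int, (exists j, m j != 0) /\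
    forall j, j != i -> `|\sum_k (m k)%:~R * a j k| < eps.
Proof.
move=> he.
pose B : R := 1 + \sum_j \sum_k `|a j k|.
have B1 : 1 <= B by rewrite /B lerDl; do 2!(apply: sumr_ge0 => ? _); exact: normr_ge0.
have Bj j : \sum_k `|a j k| <= B.
  have h1 : \sum_k `|a j k| <= \sum_j \sum_k `|a j k|.
    have := @le_sum_one R _ (fun j => \sum_k `|a j k|) j; apply => x.
    by apply: sumr_ge0 => k _.
  by rewrite /B; lra.
pose C : nat := (Num.truncn (2 * B / eps) + 2)%N.
have hC : 2 * B / eps < C%:R.
  rewrite /C natrD; have := truncnS_gt (2 * B / eps); rewrite -natr1; lra.
pose N : nat := (C ^ n.-1)%N.
have N1 : (1 <= N)%N by rewrite /N expn_gt0 /C addn2.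
pose Kc := (N * C)%N.
pose vl (f : {ffun 'I_n -> 'I_N.+1}) j := \sum_k (f k)%:R * a j k.
have valb f j : `|vl f j| <= N%:R * B.
  apply: le_trans (ler_norm_sum _ _ _) _.
  apply: (@le_trans _ _ (\sum_k N%:R * `|a j k|)).
    apply: ler_sum => k _; rewrite normrM ler_wpM2r // ger0_norm // ler_nat.
    by rewrite -ltnS ltn_ord.
  by rewrite -mulr_sumr ler_wpM2l // Bj.
pose u f j := (vl f j + N%:R * B) / eps.
have u0 f j : 0 <= u f j.
  apply: divr_ge0; last exact: ltW.
  by have := valb f j; rewrite ler_norml => /andP[h _]; lra.
have cell_lt f j : (Num.truncn (u f j) < Kc)%N.
  rewrite truncn_lt_nat // /Kc natrM.
  have : u f j <= 2 * (N%:R * B) / eps.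
    rewrite ler_pM2r ?invr_gt0 //.
    by have := valb f j; rewrite ler_norml => /andP[_ h]; lra.
  move=> h; apply: le_lt_trans h _.
  rewrite -mulrA mulrCA mulrA -[X in X < _]mulrA.
  have hN : 0 < (N%:R : R) by rewrite ltr0n.
  by rewrite -mulrA ltr_pM2l // mulrCA mulrA.
pose g (f : {ffun 'I_n -> 'I_N.+1}) : {ffun 'I_n.-1 -> 'I_Kc} :=
  [ffun t => Ordinal (cell_lt f (lift i t))].
have [f1 [f2 [hne heq]]] : exists f1 f2, f1 != f2 /\ g f1 = g f2.
  apply: contrapT => H.
  have inj : injective g.
    move=> f1 f2 h; apply/eqP; apply: contrapT => /negP hne.
    by apply: H; exists f1, f2.
  have := leq_card g inj; rewrite !card_ffun !card_ord.
  have n0 : (0 < n)%N by apply: leq_ltn_trans (ltn_ord i).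
  rewrite /Kc expnMn -[(C ^ n.-1)%N]/N -expnSr prednK //.
  by rewrite leqNgt ltn_exp2r ?ltnSn // -lt0n.
exists (fun k => (f1 k)%:Z - (f2 k)%:Z); split.
  apply: contrapT => H; move/negP: hne; apply; apply/eqP/ffunP => k.
  apply/val_inj; apply: contrapT => hk; apply: H; exists k.
  by rewrite subr_eq0; apply/negP => /eqP h; apply: hk; case: h.
move=> j hj; have hj2 : i != j by rewrite eq_sym.
have [t hjt _] := unlift_some hj2; rewrite hjt.
have := congr1 (fun f : {ffun 'I_n.-1 -> 'I_Kc} => f t) heq; rewrite /g !ffunE => /(congr1 val) /= ht.
have := trunc_close (u0 f1 (lift i t)) (u0 f2 (lift i t)) ht.
rewrite /u -mulrBl normrM (@gtr0_norm _ eps^-1) ?invr_gt0 //.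
have -> : vl f1 (lift i t) + N%:R * B - (vl f2 (lift i t) + N%:R * B) =
   \sum_k ((f1 k)%:Z - (f2 k)%:Z)%:~R * a (lift i t) k.
  rewrite /vl opprD addrACA subrr addr0 -sumrB; apply: eq_bigr => k _.
  by rewrite rmorphB /= mulrBl.
by rewrite ltr_pdivrMr // mul1r.
Qed.


Lemma rat_approx (R : realType) (t del : R) : 0 < del -> exists r : rat, `|t - ratr r| < del.
Proof.
move=> hd.
pose N : nat := (Num.truncn (del^-1) + 1)%N.
have hN : 0 < (N%:R : R) by rewrite ltr0n /N addn1.
have hNd : del^-1 < N%:R by rewrite /N natrD; have := truncnS_gt (del^-1); rewrite -natr1.
exists ((Num.floor (t * N%:R))%:~R / N%:R).
rewrite fmorph_div rmorph_int rmorph_nat.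
have /andP [f1 f2] := floor_itv (t * N%:R).
have h1 : 0 <= t - (Num.floor (t * N%:R))%:~R / N%:R.
  by rewrite subr_ge0 ler_pdivrMr.
have h2 : t - (Num.floor (t * N%:R))%:~R / N%:R < N%:R^-1.
  have e : N%:R^-1 + (Num.floor (t * N%:R))%:~R / N%:R =
           (Num.floor (t * N%:R) + 1)%:~R / N%:R :> R.
    by rewrite intrD mulrDl addrC div1r.
  by rewrite ltrBlDr e ltr_pdivlMr.
rewrite ger0_norm //; apply: lt_le_trans h2 _.
rewrite -[del]invrK lef_pV2 ?posrE ?invr_gt0 //; exact: ltW.
Qed.

Section Main.
Variables (R : realType) (K : fieldExtType rat) (n : nat).
Variable tau : 'I_n -> {rmorphism K -> R}.
Hypothesis tau_inj : forall i j : 'I_n, (forall x : K, tau i x = tau j x) -> i = j.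

Lemma dedekind_gen s (c : 'I_n -> R) : (#|[pred i | c i != 0%R]| <= s)%N ->
  (forall x, \sum_i c i * tau i x = 0) -> forall i, c i = 0.
Proof.
elim: s c => [|s IH] c hs hc i.
  apply/eqP; apply: contraT => ci.
  have : (0 < #|[pred i | c i != 0%R]|)%N by apply/card_gt0P; exists i.
  by rewrite leqn0 in hs; rewrite (eqP hs).
apply/eqP/negPn/negP => ci0.
case: (pselect (exists j, j != i /\ c j != 0)) => [[j [ji cj]] | no].
  have [y hy] : exists y, tau i y != tau j y.
    apply: contrapT => H; move: ji; rewrite (tau_inj (i := j) (j := i)) ?eqxx //.
    by move=> x; apply: contrapT => /eqP h; apply: H; exists x; rewrite eq_sym.
  pose c' k := c k * (tau k y - tau i y).
  have hc' : forall x, \sum_k c' k * tau k x = 0.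
    move=> x; rewrite /c'.
    have -> : \sum_k c k * (tau k y - tau i y) * tau k x =
       \sum_k c k * tau k (y * x) - tau i y * \sum_k c k * tau k x.
      rewrite mulr_sumr -sumrB; apply: eq_bigr => k _; rewrite rmorphM /=.
      by rewrite mulrBr mulrBl; congr (_ - _); [rewrite mulrA | rewrite mulrA [tau i y * c k]mulrC].
    by rewrite (hc (y * x)) (hc x) mulr0 subr0.
  have hs' : (#|[pred k | c' k != 0%R]| <= s)%N.
    have sub : [pred k | c' k != 0] \subset [predD1 [pred k | c k != 0] & i].
      apply/fintype.subsetP => k; rewrite !inE /c' mulf_eq0 negb_or => /andP[ck hk].
      rewrite ck andbT; apply: contra hk => /eqP ->; by rewrite subrr.
    have h2 := cardD1 i [pred k | c k != 0]; rewrite inE ci0 in h2.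
    move: hs; rewrite h2 add1n ltnS; exact: leq_trans (subset_leq_card sub).
  have := IH c' hs' hc' j; rewrite /c' => /eqP; rewrite mulf_eq0 (negbTE cj) /=.
  by rewrite subr_eq0 eq_sym (negbTE hy).
have := hc 1; rewrite (bigD1 i) //= big1 ?addr0.
  by rewrite rmorph1 mulr1 => /eqP; rewrite (negbTE ci0).
move=> k ki; case: (eqVneq (c k) 0) => [-> | ck]; first by rewrite mul0r.
by exfalso; apply: no; exists k.
Qed.

Lemma dedekind (c : 'I_n -> R) : (forall x, \sum_i c i * tau i x = 0) -> forall i, c i = 0.
Proof. apply: (@dedekind_gen n) => //; apply: leq_trans (max_card _) _; by rewrite card_ord. Qed.


Lemma tauZ i a x : tau i (a *: x) = ratr a * tau i x.
Proof. exact: rmorphZ_num. Qed.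

Variables (e : 'I_n -> K) (co : 'I_n -> K -> rat).
Hypothesis he : forall x, x = \sum_j co j x *: e j.
Hypothesis coD : forall j x y, co j (x + y) = co j x + co j y.
Hypothesis coZ : forall j a x, co j (a *: x) = a * co j x.
Hypothesis coe : forall j k, co j (e k) = (j == k)%:R.

Lemma co0 j : co j 0 = 0.
Proof. by have := coZ j 0 0; rewrite scale0r mul0r. Qed.

Lemma co_sum j (I : finType) (f : I -> K) : co j (\sum_t f t) = \sum_t co j (f t).
Proof.
elim/big_rec2: _ => [|t a b _ IH]; first by rewrite co0.
by rewrite coD IH.
Qed.

Lemma tau_expand i x : tau i x = \sum_j ratr (co j x) * tau i (e j).
Proof.
by rewrite {1}(he x) rmorph_sum; apply: eq_bigr => j _; rewrite tauZ.
Qed.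

Definition E : 'M[R]_n := \matrix_(i, j) tau i (e j).
Definition Mm (x : K) : 'M[rat]_n := \matrix_(j, k) co j (x * e k).

Lemma E_unit : E \in unitmx.
Proof.
rewrite unitmxE unitfE; apply/negP => /det0P [v vn0 vE].
move/negP: vn0; apply; apply/eqP/rowP => i; rewrite mxE.
have := (@dedekind (fun i => v 0 i)) _ i; apply => x.
under eq_bigr => i' _ do rewrite tau_expand mulr_sumr.
rewrite exchange_big /= big1 // => j _.
have := congr1 (fun M : 'M[R]_(1, n) => M 0 j) vE; rewrite !mxE => h.
rewrite (eq_bigr (fun i' => ratr (co j x) * (v 0 i' * E i' j))).
  by rewrite -mulr_sumr h mulr0.
by move=> i' _; rewrite mxE mulrCA.
Qed.

Lemma diag_rel x :
  diag_mx (\row_i tau i x) *m E = E *m map_mx ratr (Mm x).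
Proof.
apply/matrixP => i k; rewrite mul_diag_mx !mxE.
rewrite -rmorphM (tau_expand i (x * e k)).
by apply: eq_bigr => j _; rewrite !mxE mulrC.
Qed.

Lemma diag_eq x :
  diag_mx (\row_i tau i x) = E *m map_mx ratr (Mm x) *m invmx E.
Proof. by rewrite -diag_rel mulmxK // E_unit. Qed.

Lemma trace_rat x : traceKR tau x = ratr (\tr (Mm x)).
Proof.
have := congr1 mxtrace (diag_eq x).
rewrite mxtrace_diag -mulmxA mxtrace_mulC -mulmxA mulVmx ?E_unit // mulmx1.
under eq_bigr do rewrite mxE.
rewrite /traceKR => ->; rewrite /mxtrace rmorph_sum; apply: eq_bigr => i _; by rewrite mxE.
Qed.

Lemma norm_rat x : \prod_i tau i x = ratr (\det (Mm x)).
Proof.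
have := congr1 determinant (diag_rel x).
rewrite !det_mulmx det_diag det_map_mx mulrC => h.
have hE : \det E != 0 by move: E_unit; rewrite unitmxE unitfE.
rewrite -(mulfI hE h); by apply: eq_bigr => i _; rewrite mxE.
Qed.


Lemma trace_int y : in_OK y -> exists z : int, traceKR tau y = z%:~R.
Proof.
move=> /in_OK_integral hy.
have hi : integralOver (intr : int -> R) (traceKR tau y).
  by apply: integral_sum => i; exact: integral_morph.
rewrite trace_rat in hi *; have /intrP [z hz] := rat_int_of_integral hi.
by exists z; rewrite hz rmorph_int.
Qed.

Lemma eig_integral m (y : K) (Z : 'M[int]_m) (v : 'rV[K]_m) :
  v != 0 -> v *m map_mx intr Z = y *: v -> in_OK y.
Proof.
move=> vn0 hv; apply/in_OK_integral; exists (char_poly Z); first exact: char_poly_monic.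
rewrite map_char_poly -eigenvalue_root_char; apply/eigenvalueP; by exists v.
Qed.

Lemma prod_factor (F : 'I_n -> int) i : exists r : int, \prod_j F j = F i * r.
Proof. by exists (\prod_(j | j != i) F j); rewrite (bigD1 i). Qed.

Definition D : int := \prod_(j < n) \prod_(k < n) \prod_(l < n) denq (co l (e j * e k)).

Lemma D_gt0 : 0 < D.
Proof. by do 3!(apply: prodr_gt0 => ? _); exact: denq_gt0. Qed.

Lemma D_int j k l : D%:~R * co l (e j * e k) \is a Num.int.
Proof.
have [r1 h1] := prod_factor (fun j => \prod_(k < n) \prod_(l < n) denq (co l (e j * e k))) j.
have [r2 h2] := prod_factor (fun k => \prod_(l < n) denq (co l (e j * e k))) k.
have [r3 h3] := prod_factor (fun l => denq (co l (e j * e k))) l.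
rewrite /D h1 /= h2 h3 !rmorphM /= mulrC !mulrA -numqE.
by rewrite !rpredM ?intr_int.
Qed.

Lemma ratr_scale (q : rat) (y : K) : q *: y = ratr q * y.
Proof. by rewrite -mulr_algl alg_num_field. Qed.

Lemma e_neq0 j : e j != 0.
Proof. apply/eqP => h; have := coe j j; rewrite h co0 eqxx => /eqP; by rewrite eq_sym oner_eq0. Qed.

Definition b j : K := (D%:~R : K) * e j.

Lemma D_neq0 : (D%:~R : K) != 0.
Proof. by rewrite -(rmorph_int (in_alg K)) fmorph_eq0 intr_eq0 gt_eqF // D_gt0. Qed.

Lemma b_integral j : in_OK (b j).
Proof.
pose Z : 'M[int]_n := \matrix_(l, k) Num.floor (D%:~R * co l (e j * e k)).
apply: (@eig_integral n (b j) Z (\row_k b k)).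
  apply/eqP => /rowP /(_ j); rewrite !mxE => /eqP.
  by rewrite /b mulf_eq0 (negbTE D_neq0) (negbTE (e_neq0 j)).
apply/rowP => k; rewrite !mxE.
have hZ l : ((Num.floor (D%:~R * co l (e j * e k)))%:~R : K) = D%:~R * ratr (co l (e j * e k)).
  by rewrite -(rmorph_int (in_alg K)) /= floorK ?D_int // -scalerA scaler_int mulrzl alg_num_field.
under eq_bigr do rewrite !mxE hZ.
have -> : b j * b k = D%:~R * D%:~R * (e j * e k) by rewrite /b; ring.
rewrite [X in _ = _ * X](he (e j * e k)) mulr_sumr; apply: eq_bigr => l _.
rewrite ratr_scale /b; ring.
Qed.

Lemma co_intr j (z : int) y : co j ((z%:~R : K) * y) = z%:~R * co j y.
Proof.
by rewrite -(rmorph_int (in_alg K)) /= mulr_algl coZ.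
Qed.

Definition lat (m : 'I_n -> int) : K := \sum_k (m k)%:~R * b k.

Lemma lat_integral m : in_OK (lat m).
Proof.
apply/in_OK_integral; apply: integral_sum => k; apply: integral_mul.
  exact: integral_intr.
exact/in_OK_integral/b_integral.
Qed.

Lemma co_lat m j : co j (lat m) = (m j)%:~R * D%:~R.
Proof.
rewrite co_sum (bigD1 j) //= big1 ?addr0.
  by rewrite co_intr /b co_intr coe eqxx mulr1.
by move=> k kj; rewrite co_intr /b co_intr coe eq_sym (negbTE kj) !mulr0.
Qed.

Lemma lat_neq0 m j : m j != 0 -> lat m != 0.
Proof.
move=> mj; apply/eqP => h; have := co_lat m j; rewrite h co0 => /eqP.
by rewrite eq_sym mulf_eq0 !intr_eq0 (negbTE mj) gt_eqF ?D_gt0.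
Qed.

Lemma Mm_lat_int m j k : Mm (lat m) j k \is a Num.int.
Proof.
rewrite mxE /lat mulr_suml co_sum rpred_sum // => l _.
by rewrite /b -!mulrA co_intr co_intr rpredM ?intr_int ?D_int.
Qed.

Lemma det_int m (A : 'M[rat]_m) : (forall i j, A i j \is a Num.int) -> \det A \is a Num.int.
Proof.
move=> hA; rewrite /determinant rpred_sum // => s _.
by rewrite rpredM ?rpred_prod // ?rpredX ?rpredN ?rpred1.
Qed.

Lemma norm_ge1 m : lat m != 0 -> 1 <= `|\prod_i tau i (lat m)|.
Proof.
move=> hn.
have hint : \det (Mm (lat m)) \is a Num.int by apply: det_int => i j; exact: Mm_lat_int.
have /intrP [z hz] := hint.
have hp : \prod_i tau i (lat m) != 0 by apply/prodf_neq0 => i _; rewrite fmorph_eq0.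
have hpz : \prod_i tau i (lat m) = z%:~R by rewrite norm_rat hz rmorph_int.
rewrite hpz; apply: norm_intr_ge1; [exact: intr_int | by rewrite -hpz].
Qed.

Lemma small_elem i eps : 0 < eps -> eps <= 1 -> exists g : K,
  [/\ in_OK g, (forall j, 0 < tau j g), (forall j, j != i -> tau j g < eps) &
      1 <= \prod_j tau j g].
Proof.
move=> heps he1.
have [m [[j0 mj0] hm]] := pigeon (fun j k => tau j (b k)) i heps.
have hb0 : lat m != 0 by exact: lat_neq0 mj0.
have htl j : tau j (lat m) = \sum_k (m k)%:~R * tau j (b k).
  by rewrite rmorph_sum; apply: eq_bigr => k _; rewrite rmorphM rmorph_int.
have hne j : tau j (lat m) != 0 by rewrite fmorph_eq0.
exists (lat m * lat m); split.
- by apply/in_OK_integral; apply: integral_mul; apply/in_OK_integral/lat_integral.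
- by move=> j; rewrite rmorphM -expr2 exprn_even_gt0 //= hne orbT.
- move=> j hj; have := hm j hj; rewrite -htl => h; have h1 := ltW (lt_le_trans h he1).
  rewrite rmorphM; apply: le_lt_trans h; apply: le_trans (real_ler_norm (num_real _)) _.
  rewrite normrM ler_piMr ?normr_ge0 //; exact: h1.
- have h := norm_ge1 hb0.
  rewrite (eq_bigr (fun j => tau j (lat m) * tau j (lat m))) => [|j _]; last by rewrite rmorphM.
  have h3 := ler_peMr (normr_ge0 (\prod_j tau j (lat m))) h.
  rewrite big_split /=; apply: le_trans h _; apply: le_trans h3 _.
  by rewrite -normrM ger0_norm // -expr2 exprn_even_ge0.
Qed.


Definition dotl (l : 'rV[R]_n) (a : K) := \sum_i l 0 i * tau i a.

Lemma dotr_mink l a : dotr l (minkowski tau a) = dotl l a.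
Proof. by apply: eq_bigr => i _; rewrite mxE. Qed.

Lemma lat_in_C a : in_OK a -> (forall i, 0 < tau i a) ->
  klein_polyhedron tau (minkowski tau a).
Proof.
move=> ha hp; exists 1%N, (fun _ => minkowski tau a), (fun _ => 1); split; [|split; [|split]].
- move=> _; exists a; split => //; split => // i; by rewrite mxE.
- by move=> _; exact: ler01.
- by rewrite big_ord1.
- by rewrite big_ord1 scale1r.
Qed.

Lemma dotlD l a a' : dotl l (a + a') = dotl l a + dotl l a'.
Proof. by rewrite /dotl -big_split; apply: eq_bigr => i _; rewrite rmorphD mulrDr. Qed.

Lemma l_pos (l : 'rV[R]_n) (c : R) (a0 : K) :
  l != 0 -> (forall x, klein_polyhedron tau x -> c <= dotr l x) ->
  in_OK a0 -> (forall i, 0 < tau i a0) -> dotl l a0 = c ->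
  (0 < c) /\ forall i, 0 < l 0 i.
Proof.
move=> hl0 hsupp ha0 hp0 hc0.
have hC a : in_OK a -> (forall i, 0 < tau i a) -> c <= dotl l a.
  by move=> ha hp; rewrite -dotr_mink; apply: hsupp; exact: lat_in_C.
pose L := \sum_j `|l 0 j|.
have hL : 0 <= L by apply: sumr_ge0 => j _.
have key i eps g : (forall j, 0 < tau j g) -> (forall j, j != i -> tau j g < eps) ->
    0 < eps -> dotl l g <= l 0 i * tau i g + L * eps.
  move=> hg hge heps; rewrite /dotl (bigD1 i) //= lerD2l.
  apply: (@le_trans _ _ (\sum_(j | j != i) `|l 0 j| * eps)).
    apply: ler_sum => j hj; apply: le_trans (real_ler_norm (num_real _)) _.
    by rewrite normrM ler_wpM2l // (gtr0_norm (hg j)) ltW // hge.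
  rewrite -mulr_suml ler_wpM2r ?(ltW heps) // /L [X in _ <= X](bigD1 i) //= lerDr.
  exact: normr_ge0.
have c0 : 0 <= c.
  have := hC (a0 + a0).
  rewrite dotlD hc0 => h; have : c <= c + c.
    apply: h; first by apply/in_OK_integral/integral_add; apply/in_OK_integral.
    by move=> i; rewrite rmorphD addr_gt0.
  lra.
have lge0 i : 0 <= l 0 i.
  case: (lerP 0 (l 0 i)) => // hli; exfalso.
  pose t := - l 0 i.
  have ht : 0 < t by rewrite /t oppr_gt0.
  pose eps := t / (L + 1).
  have hL1 : 0 < L + 1 by lra.
  have heps : 0 < eps by rewrite /eps divr_gt0.
  have hepsL : eps * (L + 1) = t by rewrite /eps mulrVK // unitfE gt_eqF.
  have htL : t <= L.
    rewrite /t /L (bigD1 i) //=.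
    have h1 : - l 0 i <= `|l 0 i| by rewrite -normrN; exact: real_ler_norm (num_real _).
    have h2 : 0 <= \sum_(j | j != i) `|l 0 j| by apply: sumr_ge0.
    lra.
  have heps1 : eps <= 1 by nra.
  have [g [hgO hgp hgs hgn]] := small_elem i heps heps1.
  have h1 := key i eps g hgp hgs heps.
  have h2 := hC g.
  have hgi : tau i g < 1.
    have : c <= dotl l g.
      exact: hC.
    have hli' : l 0 i = - t by rewrite /t opprK.
    rewrite hli' in h1; move=> hcg; have := hgp i; nra.
  have : \prod_j tau j g <= tau i g.
    rewrite (bigD1 i) //= ler_piMr ?(ltW (hgp i)) //.
    apply: prodr_ile1 => j hj; rewrite ltW ?hgp //=.
    exact: ltW (lt_le_trans (hgs j hj) heps1).
  move: hgn hgi; lra.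
have [j0 hj0] : exists j0, l 0 j0 != 0.
  apply: contrapT => H; move/negP: hl0; apply; apply/eqP/rowP => j.
  rewrite mxE; apply/eqP; apply: contrapT => /negP hj; apply: H; exists j.
  exact: hj.
have cpos : 0 < c.
  rewrite -hc0 /dotl (bigD1 j0) //=.
  have h1 : 0 < l 0 j0 * tau j0 a0 by rewrite mulr_gt0 // lt0r hj0 lge0.
  have h2 : 0 <= \sum_(j | j != j0) l 0 j * tau j a0.
    by apply: sumr_ge0 => j _; rewrite mulr_ge0 // ltW.
  lra.
split => // i; have := lge0 i; rewrite le0r => /orP [/eqP li0 | //]; exfalso.
pose eps := c / (c + L + 1).
have hcL : 0 < c + L + 1 by lra.
have heps : 0 < eps by rewrite /eps divr_gt0.
have hepsL : eps * (c + L + 1) = c by rewrite /eps mulrVK // unitfE gt_eqF.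
have heps1 : eps <= 1 by nra.
have [g [hgO hgp hgs hgn]] := small_elem i heps heps1.
have h1 := key i eps g hgp hgs heps.
have h2 := hC g hgO hgp.
rewrite li0 mul0r add0r in h1.
nra.
Qed.



Lemma traceD x y : traceKR tau (x + y) = traceKR tau x + traceKR tau y.
Proof. by rewrite /traceKR -big_split; apply: eq_bigr => i _; rewrite rmorphD. Qed.

Lemma traceZ a x : traceKR tau (a *: x) = ratr a * traceKR tau x.
Proof. by rewrite /traceKR mulr_sumr; apply: eq_bigr => i _; rewrite tauZ. Qed.

Lemma trace0 : traceKR tau 0 = 0.
Proof. by rewrite /traceKR big1 // => i _; rewrite rmorph0. Qed.

Lemma trace_sum (I : finType) (f : I -> K) :
  traceKR tau (\sum_t f t) = \sum_t traceKR tau (f t).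
Proof.
elim/big_rec2: _ => [|t x y _ IH]; first by rewrite trace0.
by rewrite traceD IH.
Qed.

Definition shs (a0 : K) (s : seq K) := [seq x - a0 | x <- s].

Lemma span_dim (P : K -> Prop) (a0 : K) k : exists s : seq K, (forall x, x \in s -> P x) /\
  ((k <= \dim <<shs a0 s>>)%N \/
   forall a, P a -> a - a0 \in <<shs a0 s>>%VS).
Proof.
elim: k => [|k [s [hs [hk | hall]]]]; first by exists [::]; split => //; left.
- case: (pselect (forall a, P a -> a - a0 \in <<shs a0 s>>%VS)) => [hall|hn].
    by exists s; split => //; right.
  have [a [ha hna]] : exists a, P a /\ a - a0 \notin <<shs a0 s>>%VS.
    apply: contrapT => H; apply: hn => a ha; apply: contrapT => hna'; apply: H.
    by exists a; split => //; apply/negP.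
  exists (a :: s); split.
    by move=> x; rewrite inE => /orP [/eqP -> | /hs].
  left; rewrite /shs /= span_cons -/(shs a0 s).
  have := dimv_leqif_sup (addvSr <[a - a0]> <<shs a0 s>>) => /leqifP.
  case: ifP => [h _ | _ hlt]; last exact: leq_ltn_trans hk hlt.
  exfalso; move/negP: hna; apply; rewrite memvE.
  exact: subv_trans (addvSl _ _) h.
- by exists s; split => //; right.
Qed.

Lemma lat_scale (r : 'I_n -> rat) (M : int) : (forall j, M%:~R * r j \is a Num.int) ->
  in_OK ((M * D)%:~R * \sum_j r j *: e j).
Proof.
move=> hr.
pose z j := Num.floor (M%:~R * r j).
have -> : (M * D)%:~R * \sum_j r j *: e j = lat z.
  rewrite /lat mulr_sumr; apply: eq_bigr => j _.
  have hz : ((z j)%:~R : K) = M%:~R * ratr (r j).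
    by rewrite /z -(rmorph_int (in_alg K)) /= floorK ?hr // -scalerA scaler_int mulrzl alg_num_field.
  by rewrite hz ratr_scale /b intrM; ring.
exact: lat_integral.
Qed.

Lemma denom_int (r : 'I_n -> rat) j : (\prod_k denq (r k))%:~R * r j \is a Num.int.
Proof.
have [r1 h] := prod_factor (fun k => denq (r k)) j.
by rewrite h intrM mulrAC [(denq _)%:~R * _]mulrC -numqE rpredM ?intr_int.
Qed.

Lemma denom_gt0 (r : 'I_n -> rat) : 0 < \prod_k denq (r k).
Proof. by apply: prodr_gt0 => k _; exact: denq_gt0. Qed.


Lemma dotlB l x y : dotl l (x - y) = dotl l x - dotl l y.
Proof. by rewrite /dotl -sumrB; apply: eq_bigr => i _; rewrite rmorphB mulrBr. Qed.

Lemma rational_normal (l : 'rV[R]_n) (P : K -> Prop) (a0 : K) :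
  (forall i, 0 < l 0 i) -> (forall a, P a -> dotl l a = dotl l a0) ->
  exists d : K, [/\ in_OK d, (forall i, 0 < tau i d) &
     forall a, P a -> traceKR tau (d * a) = traceKR tau (d * a0)].
Proof.
move=> lpos hP.
have [s [hs hspan]] : exists s : seq K, (forall x, x \in s -> P x) /\
    forall a, P a -> a - a0 \in <<shs a0 s>>%VS.
  have [s [hs [hk | hall]]] := span_dim P a0 (\dim {:K}).+1.
    by exfalso; move: hk; rewrite ltnNge dimvS // subvf.
  by exists s.
pose X := in_tuple (shs a0 s).
pose r := size (shs a0 s).
pose A : 'M[rat]_(n, r) := \matrix_(j, t) \tr (Mm (e j * X`_t)).
have hA j (t : 'I_r) : traceKR tau (e j * X`_t) = ratr (A j t) by rewrite mxE trace_rat.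
have hX (t : 'I_r) : dotl l X`_t = 0.
  have : X`_t \in shs a0 s by apply: mem_nth.
  case/mapP => x hx ->; rewrite dotlB hP ?subrr //; exact: hs.
have EtU : E^T \in unitmx by rewrite unitmx_tr E_unit.
pose ql := l *m invmx E^T.
have hql : ql *m E^T = l by rewrite mulmxKV.
have hqlA : ql *m map_mx ratr A = 0.
  apply/rowP => t; rewrite !mxE.
  transitivity (dotl l X`_t); last exact: hX.
  rewrite /dotl -hql.
  under eq_bigr do rewrite !mxE -trace_rat /traceKR mulr_sumr.
  rewrite exchange_big /=; apply: eq_bigr => i _; rewrite !mxE mulr_suml.
  by apply: eq_bigr => j _; rewrite !mxE rmorphM mulrA.
have : (ql <= kermx (map_mx ratr A))%MS by apply/sub_kermxP.
rewrite -map_kermx => /submxP [w hw].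
pose G := map_mx ratr (kermx A) *m E^T.
have hlG : l = w *m G by rewrite /G mulmxA -hw hql.
pose S := 1 + \sum_i (l 0 i)^-1.
have hS0 : 0 <= \sum_i (l 0 i)^-1 by apply: sumr_ge0 => i _; rewrite invr_ge0 ltW.
have hS : 0 < S by rewrite /S; lra.
pose lmin := S^-1.
have hlmin0 : 0 < lmin by rewrite /lmin invr_gt0.
have hlmin i : lmin <= l 0 i.
  rewrite /lmin -[l 0 i]invrK lef_pV2 ?posrE ?invr_gt0 //.
  rewrite /S (bigD1 i) //=.
  have : 0 <= \sum_(j | j != i) (l 0 j)^-1 by apply: sumr_ge0 => j _; rewrite invr_ge0 ltW.
  lra.
pose GB := 1 + \sum_k \sum_i `|G k i|.
have hGB0 : 0 <= \sum_k \sum_i `|G k i| by do 2!(apply: sumr_ge0 => ? _).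
have hGB : 0 < GB by rewrite /GB; lra.
pose del := lmin / GB.
have hdel : 0 < del by rewrite /del divr_gt0.
have [w' hw'] : exists w' : 'I_n -> rat, forall k, `|w 0 k - ratr (w' k)| < del.
  have [w' hw'] := @fin_all_exists _ (fun _ => rat) (fun k (r : rat) => `|w 0 k - ratr r| < del)
    (fun k => rat_approx (w 0 k) hdel).
  by exists w'.
pose wr : 'rV[rat]_n := \row_k w' k.
pose q' := wr *m kermx A.
have hq'A : q' *m A = 0 by rewrite /q' -mulmxA mulmx_ker mulmx0.
pose d0 := \sum_j q' 0 j *: e j.
have htd0 i : tau i d0 = (map_mx ratr q' *m E^T) 0 i.
  by rewrite rmorph_sum mxE; apply: eq_bigr => j _; rewrite tauZ !mxE.
have hd0pos i : 0 < tau i d0.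
  rewrite htd0 /q' map_mxM -mulmxA -/G.
  have hdiff : `|(map_mx ratr wr *m G) 0 i - l 0 i| < l 0 i.
    rewrite {1}hlG.
    have -> : (map_mx ratr wr *m G) 0 i - (w *m G) 0 i = ((map_mx ratr wr - w) *m G) 0 i.
      by rewrite mulmxBl !mxE.
    rewrite mxE.
    apply: le_lt_trans (ler_norm_sum _ _ _) _.
    apply: (@le_lt_trans _ _ (\sum_k del * `|G k i|)).
      apply: ler_sum => k _; rewrite normrM ler_wpM2r // !mxE.
      by rewrite distrC ltW.
    rewrite -mulr_sumr; apply: (@lt_le_trans _ _ (del * GB)); last first.
      by rewrite /del mulrVK ?unitfE ?gt_eqF // hlmin.
    rewrite ltr_pM2l // /GB.
    have : \sum_k `|G k i| <= \sum_k \sum_i `|G k i|.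
      rewrite exchange_big /=.
      by apply: (@le_sum_one _ _ (fun i => \sum_k `|G k i|)) => j; apply: sumr_ge0.
    lra.
  move: hdiff; rewrite ltr_norml => /andP [h1 _]; lra.
have htr0 (t : 'I_r) : traceKR tau (d0 * X`_t) = 0.
  rewrite /d0 mulr_suml trace_sum.
  under eq_bigr do rewrite -scalerAl traceZ hA.
  have := congr1 (fun M : 'M_(1, r) => ratr (M 0 t) : R) hq'A.
  rewrite !mxE rmorph_sum rmorph0 => h; rewrite -[RHS]h; apply: eq_bigr => j _; by rewrite rmorphM.
have htrP a : P a -> traceKR tau (d0 * a) = traceKR tau (d0 * a0).
  move=> ha; have hc := @coord_span _ _ _ X (a - a0) (hspan a ha).
  have -> : a = a0 + (a - a0) by rewrite addrC subrK.
  rewrite mulrDr traceD hc mulr_sumr trace_sum big1 ?addr0 // => t _.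
  by rewrite -scalerAr traceZ htr0 mulr0.
pose M := \prod_k denq (q' 0 k).
have hMD : (0 : R) < (M * D)%:~R by rewrite ltr0z mulr_gt0 ?D_gt0 // denom_gt0.
exists ((M * D)%:~R * d0); split.
- exact: lat_scale (denom_int (fun k => q' 0 k)).
- by move=> i; rewrite rmorphM rmorph_int mulr_gt0.
- move=> a ha; rewrite -!mulrA -(rmorph_int (in_alg K)) /= !mulr_algl !traceZ.
  by rewrite htrP.
Qed.

End Main.

Lemma dotr_lin (R : realType) n (l : 'rV[R]_n) m (w : 'I_m -> R) (p : 'I_m -> 'rV[R]_n) :
  dotr l (\sum_j w j *: p j) = \sum_j w j * dotr l (p j).
Proof.
rewrite /dotr; under eq_bigr do rewrite summxE mulr_sumr.
rewrite exchange_big /=; apply: eq_bigr => j _; rewrite mulr_sumr.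
by apply: eq_bigr => i _; rewrite mxE mulrCA.
Qed.

Lemma convex_tight (R : realType) m (w f : 'I_m -> R) c :
  (forall j, 0 <= w j) -> \sum_j w j = 1 -> (forall j, c <= f j) ->
  \sum_j w j * f j = c -> forall j, 0 < w j -> f j = c.
Proof.
move=> hw hs hf he j hj.
have h0 : \sum_j w j * (f j - c) = 0.
  under eq_bigr do rewrite mulrBr.
  by rewrite sumrB he -mulr_suml hs mul1r subrr.
have hge : forall j, true -> 0 <= w j * (f j - c).
  by move=> k _; rewrite mulr_ge0 // subr_ge0.
have := @psumr_eq0P _ _ (fun _ => true) (fun j => w j * (f j - c)) hge h0 j isT.
by move/eqP; rewrite mulf_eq0 (gt_eqF hj) subr_eq0 => /eqP.
Qed.

Lemma exists_pos (R : realType) m (w : 'I_m -> R) :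
  (forall j, 0 <= w j) -> \sum_j w j = 1 -> exists j, 0 < w j.
Proof.
move=> hw hs; apply: contrapT => H.
have : \sum_j w j = 0.
  apply: big1 => j _; apply/eqP; rewrite eq_le hw andbT.
  by rewrite leNgt; apply/negP => h; apply: H; exists j.
by rewrite hs => /eqP; rewrite oner_eq0.
Qed.

Lemma integral_mulOK (K : fieldExtType rat) (x y : K) : in_OK x -> in_OK y -> in_OK (x * y).
Proof.
by move=> /in_OK_integral hx /in_OK_integral hy; apply/in_OK_integral; exact: integral_mul.
Qed.

Lemma pt_in_C (R : realType) (K : fieldExtType rat) n (tau : 'I_n -> {rmorphism K -> R}) v :
  pos_lattice_points tau v -> klein_polyhedron tau v.
Proof.
move=> hv; exists 1%N, (fun _ => v), (fun _ => 1); split; [|split; [|split]].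
- by move=> _.
- by move=> _; exact: ler01.
- by rewrite big_ord1.
- by rewrite big_ord1 scale1r.
Qed.

Unset Implicit Arguments.
Local Open Scope ring_scope.
Local Open Scope classical_set_scope.

Theorem lemma2p5 (R : realType) (K : fieldExtType rat) (n : nat)
  (tau : 'I_n -> {rmorphism K -> R}) (F : set 'rV[R]_n) :
  totally_real_embeddings tau ->
  is_sail_face tau F ->
  exists (d : K) (k : nat),
    in_codifferent tau d /\ totally_positive tau d /\
    (forall x, F x -> \sum_i tau i d * x ord0 i = k%:R).
Proof.
move=> [hn hdist] [l [c [hl0 [hsupp [hF [x0 hx0]]]]]].
rewrite hF in hx0; case: hx0 => [[m [p [w [hp [hw [hsum hx]]]]]] hx0c].
have hdw : dotr l x0 = \sum_j w j * dotr l (p j) by rewrite hx dotr_lin.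
have hpc : forall j, 0 < w j -> dotr l (p j) = c.
  apply: convex_tight hw hsum _ _.
    move=> j; apply: hsupp; exists 1%N, (fun _ => p j), (fun _ => 1); split; [|split; [|split]].
    - by move=> _; exact: hp.
    - by move=> _; exact: ler01.
    - by rewrite big_ord1.
    - by rewrite big_ord1 scale1r.
  by rewrite -hdw.
have [j0 hj0] := exists_pos hw hsum.
have [a0 [ha0 [hpa0 hpos0]]] := hp j0.
have hpos0' i : 0 < tau i a0 by have := hpos0 i; rewrite hpa0 mxE.
have hc0 : dotl tau l a0 = c by rewrite -dotr_mink -hpa0 hpc.
subst n.
pose bs := vbasis (fullv : {vspace K}).
pose e := fun j : 'I_(\dim (fullv : {vspace K})) => bs`_j.
pose co := fun (j : 'I_(\dim (fullv : {vspace K}))) (x : K) => coord bs j x.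
have he x : x = \sum_j co j x *: e j by exact: coord_vbasis (memvf x).
have coD j x y : co j (x + y) = co j x + co j y by rewrite /co linearD.
have coZ j a x : co j (a *: x) = a * co j x by rewrite /co linearZ.
have coe j k : co j (e k) = (j == k)%:R.
  rewrite /co /e coord_free ?(eq_sym k) //; exact: basis_free (vbasisP _).
have [cpos lpos] := l_pos hdist he coD coZ coe hl0 hsupp ha0 hpos0' hc0.
pose P a := [/\ in_OK a, (forall i, 0 < tau i a) & dotl tau l a = c].
have hP a : P a -> dotl tau l a = dotl tau l a0 by case=> _ _ ->; rewrite hc0.
have [d [hdO hdpos hdtr]] := rational_normal hdist he coZ coe lpos hP.
have [z hz] := trace_int hdist he (integral_mulOK hdO ha0).
have hN : (0 < \dim (fullv : {vspace K}))%N.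
  rewrite lt0n dimv_eq0; apply/eqP => h; have := memvf (1 : K).
  by rewrite h memv0 oner_eq0.
pose i0 := Ordinal hN.
have hz0 : (0 : R) < z%:~R.
  rewrite -hz /traceKR (bigD1 i0) //=.
  have h1 : 0 < tau i0 (d * a0) by rewrite rmorphM mulr_gt0.
  have h2 : 0 <= \sum_(i | i != i0) tau i (d * a0).
    by apply: sumr_ge0 => i _; rewrite rmorphM mulr_ge0 // ltW.
  lra.
have hk : ((`|z|%N)%:R : R) = z%:~R.
  by rewrite pmulrn gez0_abs //; have := ltW hz0; rewrite ler0z.
exists d, `|z|%N; split; [|split].
- move=> a ha; apply: (trace_int hdist he); exact: integral_mulOK.
- exact: hdpos.
move=> x hxF; rewrite hF in hxF; case: hxF => [[m' [p' [w' [hp' [hw' [hsum' hx']]]]]] hxc].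
have hdx : dotr l x = \sum_j w' j * dotr l (p' j) by rewrite hx' dotr_lin.
have hpc' : forall j, 0 < w' j -> dotr l (p' j) = c.
  apply: convex_tight hw' hsum' _ _; last by rewrite -hdx.
  by move=> j; apply: hsupp; exact: pt_in_C.
pose rd : 'rV[R]_(\dim (fullv : {vspace K})) := \row_i tau i d.
have -> : \sum_i tau i d * x ord0 i = dotr rd x by apply: eq_bigr => i _; rewrite mxE.
rewrite hx' dotr_lin.
have -> : (`|z|%N)%:R = \sum_j w' j * (`|z|%N)%:R :> R by rewrite -mulr_suml hsum' mul1r.
apply: eq_bigr => j _.
case: (eqVneq (w' j) 0) => [-> | hwj]; first by rewrite !mul0r.
have hwj' : 0 < w' j by rewrite lt0r hwj hw'.
congr (_ * _).
have [a [ha [hpa hposa]]] := hp' j.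
have hposa' i : 0 < tau i a by have := hposa i; rewrite hpa mxE.
have hPa : P a by split => //; rewrite -dotr_mink -hpa; exact: hpc'.
rewrite hk -hz -(hdtr a hPa) hpa /dotr /traceKR; apply: eq_bigr => i _.
by rewrite !mxE rmorphM.
Qed.
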